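(* Let $(\mathbf{a}_1,\mathbf{a}_2,\mathbf{a}_3)$ be a weakly generic triple, fix $j\in\{0,\dots,f-1\}$, and let $s\in S_3$ be the permutation with $a_{s(1),f-j-1}>a_{s(2),f-j-1}>a_{s(3),f-j-1}$. Let $R$ be an $\mathcal{O}$-algebra and $I\in\mathcal{I}(R)$. Then $$\mathrm{Ad}\big(v^{a_{s(1),f-j-1}},v^{a_{s(2),f-j-1}},v^{a_{s(3),f-j-1}}\big)\big(\varphi(I)^{-1}\big)\in\mathcal{D}_3(R).$$
   Context: $p>3$ prime, $\mathcal{O}$ the ring of integers of a finite extension of $\mathbb{Q}_p$. $\mathbf{a}_k=(a_{k,j})_{j=0}^{f-1}$ ($k=1,2,3$) are $f$-tuples of integers in $[0,p-1]$; the triple is weakly generic if $3\le|a_{1,j}-a_{2,j}|,|a_{2,j}-a_{3,j}|,|a_{1,j}-a_{3,j}|\le p-4$ for all $j$. $\mathcal{I}(R)$ is the set of $M\in\mathrm{GL}_3(R[[v]])$ that are upper triangular modulo $v$; $\mathcal{D}_3(R)$ is the set of $M\in\mathrm{GL}_3(R[[v]])$ that are diagonal modulo $v^3$. $\varphi$ is applied entrywise, where $\varphi:R[[v]]\to R[[v]]$ is the $R$-linear ring endomorphism with $v\mapsto v^p$. $\mathrm{Ad}(v^{b_1},v^{b_2},v^{b_3})(M)=\mathrm{diag}(v^{b_1},v^{b_2},v^{b_3})M\,\mathrm{diag}(v^{-b_1},v^{-b_2},v^{-b_3})$. *)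

(* Defs.v *)
From HB Require Import structures.
From mathcomp Require Import all_boot all_algebra.
From mathcomp Require Import boolp.

Set Implicit Arguments.
Unset Strict Implicit.
Unset Printing Implicit Defensive.

Import GRing.Theory.
Local Open Scope ring_scope.

Section PowerSeries.
Variable R : comNzRingType.

Record pseries := PSeries { pscoef : nat -> R }.

Lemma pseries_eq (a b : pseries) : (forall n, pscoef a n = pscoef b n) -> a = b.
Proof.
by case: a b => [a] [b] /= H; congr PSeries; apply: functional_extensionality_dep.
Qed.

HB.instance Definition _ := gen_eqMixin pseries.
HB.instance Definition _ := gen_choiceMixin pseries.

Definition ps_zero := PSeries (fun _ => 0 : R).
Definition ps_add a b := PSeries (fun n => pscoef a n + pscoef b n).
Definition ps_opp a := PSeries (fun n => - pscoef a n).

Lemma ps_addA : associative ps_add.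
Proof. by move=> a b c; apply: pseries_eq => n /=; rewrite addrA. Qed.
Lemma ps_addC : commutative ps_add.
Proof. by move=> a b; apply: pseries_eq => n /=; rewrite addrC. Qed.
Lemma ps_add0 : left_id ps_zero ps_add.
Proof. by move=> a; apply: pseries_eq => n /=; rewrite add0r. Qed.
Lemma ps_addN : left_inverse ps_zero ps_opp ps_add.
Proof. by move=> a; apply: pseries_eq => n /=; rewrite addNr. Qed.

HB.instance Definition _ :=
  GRing.isZmodule.Build pseries ps_addA ps_addC ps_add0 ps_addN.

Definition ps_one := PSeries (fun n => (n == 0%N)%:R : R).
Definition ps_mul a b :=
  PSeries (fun n => \sum_(i < n.+1) pscoef a i * pscoef b (n - i)).

(* truncation to a polynomial, used to transport the ring laws *)
Definition ps_trunc n (a : pseries) : {poly R} := \poly_(i < n.+1) pscoef a i.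

Lemma ps_mul_trunc a b m n : (m <= n)%N ->
  pscoef (ps_mul a b) m = (ps_trunc n a * ps_trunc n b)`_m.
Proof.
move=> le_mn; rewrite coefM /=; apply: eq_bigr => i _.
rewrite !coef_poly.
have hi : (i < n.+1)%N by rewrite ltnS (leq_trans _ le_mn) // -ltnS.
have hmi : (m - i < n.+1)%N by rewrite ltnS (leq_trans (leq_subr _ _) le_mn).
by rewrite hi hmi.
Qed.

Lemma ps_truncD n a b : ps_trunc n (ps_add a b) = ps_trunc n a + ps_trunc n b.
Proof. by apply/polyP => i; rewrite coefD !coef_poly /=; case: ifP; rewrite ?addr0. Qed.

Lemma ps_trunc1 n : ps_trunc n ps_one = 1.
Proof.
apply/polyP => i; rewrite coef_poly coefC /=.
by case: i => [|i] //=; case: ifP.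
Qed.

Lemma ps_mulA : associative ps_mul.
Proof.
move=> a b c; apply: pseries_eq => n.
rewrite (ps_mul_trunc _ _ (leqnn n)) [RHS](ps_mul_trunc _ _ (leqnn n)).
have E1 : (ps_trunc n (ps_mul a b) * ps_trunc n c)`_n
          = (ps_trunc n a * ps_trunc n b * ps_trunc n c)`_n.
  rewrite !coefM; apply: eq_bigr => i _; rewrite coef_poly ltn_ord.
  by rewrite (ps_mul_trunc _ _ (_ : (i <= n)%N)) // -ltnS.
have E2 : (ps_trunc n a * ps_trunc n (ps_mul b c))`_n
          = (ps_trunc n a * (ps_trunc n b * ps_trunc n c))`_n.
  rewrite !coefM; apply: eq_bigr => i _; congr (_ * _).
  have hi : (n - i < n.+1)%N by rewrite ltnS leq_subr.
  by rewrite coef_poly hi (ps_mul_trunc _ _ (_ : (n - i <= n)%N)) ?leq_subr.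
by rewrite E1 E2 mulrA.
Qed.

Lemma ps_mulC : commutative ps_mul.
Proof.
move=> a b; apply: pseries_eq => n.
by rewrite !(ps_mul_trunc _ _ (leqnn n)) mulrC.
Qed.

Lemma ps_mul1 : left_id ps_one ps_mul.
Proof.
move=> a; apply: pseries_eq => n.
rewrite (ps_mul_trunc _ _ (leqnn n)) ps_trunc1 mul1r coef_poly ltnSn //.
Qed.

Lemma ps_mulDl : left_distributive ps_mul ps_add.
Proof.
move=> a b c; apply: pseries_eq => n.
rewrite (ps_mul_trunc _ _ (leqnn n)) ps_truncD mulrDl coefD.
rewrite -!(ps_mul_trunc _ _ (leqnn n)) //.
Qed.

Lemma ps_one_neq0 : ps_one != 0.
Proof.
apply/eqP => /(congr1 (fun x => pscoef x 0%N)) /= /eqP.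
by rewrite oner_eq0.
Qed.

HB.instance Definition _ :=
  GRing.Zmodule_isComNzRing.Build pseries ps_mulA ps_mulC ps_mul1 ps_mulDl
    ps_one_neq0.

Definition ps_v : pseries := PSeries (fun n => (n == 1%N)%:R).

(* Frobenius-type endomorphism phi : R[[v]] -> R[[v]], R-linear, v |-> v^p *)
Definition ps_phi (p : nat) (a : pseries) : pseries :=
  PSeries (fun n => if (p %| n)%N then pscoef a (n %/ p) else 0).

End PowerSeries.

Arguments ps_v {R}.

Notation "R [[ 'v' ]]" := (pseries R) (at level 2, format "R [[ 'v' ]]").

Section Matrices.
Variable R : comNzRingType.

Definition inGL3 (M : 'M[pseries R]_3) : Prop :=
  exists N : 'M[pseries R]_3, M *m N = 1%:M /\ N *m M = 1%:M.

(* \mathcal{I}(R): elements of GL_3(R[[v]]) upper triangular modulo v *)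
Definition in_Iwahori (M : 'M[pseries R]_3) : Prop :=
  inGL3 M /\ forall i j : 'I_3, (j < i)%N -> pscoef (M i j) 0%N = 0.

(* \mathcal{D}_3(R): elements of GL_3(R[[v]]) diagonal modulo v^3 *)
Definition in_D3 (M : 'M[pseries R]_3) : Prop :=
  inGL3 M /\ forall i j : 'I_3, i != j -> forall n, (n < 3)%N -> pscoef (M i j) n = 0.

Definition vdiag (b : 'I_3 -> nat) : 'M[pseries R]_3 :=
  diag_mx (\row_i (ps_v ^+ b i)).

End Matrices.

Definition in_range (p f : nat) (a : 'I_3 -> 'I_f -> nat) : Prop :=
  forall k j, (a k j <= p - 1)%N.

Definition weakly_generic (p f : nat) (a : 'I_3 -> 'I_f -> nat) : Prop :=
  forall (j : 'I_f) (k l : 'I_3), k != l ->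
    (3 <= `|(a k j)%:Z - (a l j)%:Z|)%N /\ (`|(a k j)%:Z - (a l j)%:Z| <= p - 4)%N.

Arguments in_range : clear implicits.
Arguments weakly_generic : clear implicits.
Arguments vdiag {R}.

(* Main.v *)
Require Import Defs.
From HB Require Import structures.
From mathcomp Require Import all_boot all_algebra all_fingroup zify.

Local Open Scope ring_scope.
Import GRing.Theory.


Lemma psD (R : comNzRingType) (a b : pseries R) n :
  pscoef (a + b) n = pscoef a n + pscoef b n.
Proof. by []. Qed.
Lemma ps0 (R : comNzRingType) n : pscoef (0 : pseries R) n = 0.
Proof. by []. Qed.
Lemma psM (R : comNzRingType) (a b : pseries R) n :
  pscoef (a * b) n = \sum_(i < n.+1) pscoef a i * pscoef b (n - i).
Proof. by []. Qed.
Lemma ps1 (R : comNzRingType) n : pscoef (1 : pseries R) n = (n == 0%N)%:R.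
Proof. by []. Qed.

Lemma coef_v (R : comNzRingType) (y : pseries R) n :
  pscoef (ps_v * y) n = if n is n'.+1 then pscoef y n' else 0.
Proof.
rewrite psM; case: n => [|n].
  by rewrite big_ord1 /= mul0r.
rewrite big_ord_recl /= mul0r add0r big_ord_recl /= mul1r subSS subn0.
rewrite big1 ?addr0 // => i _ /=.
by rewrite mul0r.

Qed.

Lemma coef_vX (R : comNzRingType) d (x : pseries R) n :
  pscoef (ps_v ^+ d * x) n = if (d <= n)%N then pscoef x (n - d) else 0.
Proof.
elim: d n => [|d IH] n; first by rewrite expr0 mul1r subn0.
rewrite exprS -mulrA coef_v; case: n => [|n] //.
Qed.

Lemma vX_cancel (R : comNzRingType) d (x y : pseries R) :
  x * ps_v ^+ d = y * ps_v ^+ d -> x = y.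
Proof.
move=> E; apply: pseries_eq => n.
move: E; rewrite (mulrC x) (mulrC y) => E.
have := congr1 (fun z => pscoef z (n + d)) E.
by rewrite !coef_vX leq_addl addnK.
Qed.

Definition rsh (R : comNzRingType) d (x : pseries R) :=
  PSeries (fun n => pscoef x (n + d)).
Arguments rsh {R}.

Lemma vX_rsh (R : comNzRingType) d (x : pseries R) :
  (forall n, (n < d)%N -> pscoef x n = 0) -> ps_v ^+ d * rsh d x = x.
Proof.
move=> H; apply: pseries_eq => n; rewrite coef_vX /=.
case: leqP => h; first by rewrite subnK.
by rewrite H.
Qed.



Lemma phiE (R : comNzRingType) p (a : pseries R) n :
  pscoef (ps_phi p a) n = if (p %| n)%N then pscoef a (n %/ p)%N else 0.
Proof. by []. Qed.

Lemma phiD (R : comNzRingType) p (a b : pseries R) :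
  ps_phi p (a + b) = ps_phi p a + ps_phi p b.
Proof. by apply: pseries_eq => n; rewrite psD !phiE; case: ifP; rewrite ?addr0. Qed.

Lemma phi0 (R : comNzRingType) p : ps_phi p (0 : pseries R) = 0.
Proof. by apply: pseries_eq => n; rewrite phiE; case: ifP. Qed.

Lemma phi1 (R : comNzRingType) p : (0 < p)%N -> ps_phi p (1 : pseries R) = 1.
Proof.
move=> hp; apply: pseries_eq => n; rewrite phiE !ps1.
case: n => [|n]; first by rewrite dvdn0 div0n.
case: ifP => // /dvdnP [q ->].
rewrite mulnK //; case: q => // q.
by rewrite muln_eq0 /= eqn0Ngt hp.
Qed.

Lemma sum_mult (R : comNzRingType) p (G : nat -> R) m : (0 < p)%N ->
  \sum_(0 <= i < (p * m).+1) (if (p %| i)%N then G (i %/ p)%N else 0)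
  = \sum_(0 <= k < m.+1) G k.
Proof.
move=> hp; elim: m => [|m IH].
  by rewrite muln0 !big_nat1 dvdn0 div0n.
rewrite (big_cat_nat _ (n := (p * m).+1)) //=; last first.
  by rewrite ltnS leq_pmul2l.
rewrite IH [RHS]big_nat_recr //=; congr (_ + _).
rewrite big_nat_recr /=; last by rewrite ltn_pmul2l.
rewrite dvdn_mulr // mulKn // big_nat_cond big1 ?add0r // => i.
case/andP=> /andP [lo hi] _.
case: ifP => // /dvdnP [q Eq]; exfalso.
move: lo hi; rewrite Eq mulnC => lo hi.
have h1 : (m < q)%N by rewrite -(ltn_pmul2r hp).
have h2 : (q < m.+1)%N by rewrite -(ltn_pmul2r hp) (mulnC m.+1).
by move: h2; rewrite ltnS leqNgt h1.
Qed.

Lemma phiM (R : comNzRingType) p (a b : pseries R) : (0 < p)%N ->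
  ps_phi p (a * b) = ps_phi p a * ps_phi p b.
Proof.
move=> hp; apply: pseries_eq => n; rewrite phiE !psM.
case: (boolP (p %| n)%N) => Hn; last first.
  rewrite big1 // => i _; rewrite !phiE.
  case: ifP => Hi; last by rewrite mul0r.
  case: ifP => Hni; last by rewrite mulr0.
  case/negP: Hn; rewrite -(subnKC (ltnSE (ltn_ord i))).
  by rewrite dvdn_addr.
move: Hn => /dvdnP [m ->]; rewrite mulnK // mulnC.
rewrite -(big_mkord xpredT (fun i => pscoef a i * pscoef b (m - i))).
rewrite -(@sum_mult _ p (fun k => pscoef a k * pscoef b (m-k)) m hp) big_mkord.
apply: eq_bigr => i _; rewrite !phiE.
case: ifP => Hi; last by rewrite mul0r.
have hi := ltn_ord i; move: Hi => /dvdnP [q Eq]; rewrite Eq in hi *.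
rewrite mulnK // (mulnC p m) -mulnBl dvdn_mull ?dvdnn // mulnK //.
Qed.



Lemma map_phiM (R : comNzRingType) p (A B : 'M[pseries R]_3) : (0 < p)%N ->
  map_mx (ps_phi p) (A *m B) = map_mx (ps_phi p) A *m map_mx (ps_phi p) B.
Proof.
move=> hp; apply/matrixP => i k; rewrite !mxE.
rewrite (big_morph (ps_phi p) (@phiD R p) (phi0 R p)).
by apply: eq_bigr => l _; rewrite !mxE phiM.
Qed.

Lemma map_phi1 (R : comNzRingType) p : (0 < p)%N ->
  map_mx (ps_phi p) (1%:M : 'M[pseries R]_3) = 1%:M.
Proof.
move=> hp; apply/matrixP => i k; rewrite !mxE.
by case: (i == k); rewrite /= ?phi1 ?phi0.
Qed.

Definition c0 (R : comNzRingType) (x : pseries R) := pscoef x 0.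

Lemma map_c0M (R : comNzRingType) (A B : 'M[pseries R]_3) :
  map_mx (@c0 R) (A *m B) = map_mx (@c0 R) A *m map_mx (@c0 R) B.
Proof.
apply/matrixP => i k; rewrite !mxE.
rewrite (big_morph (@c0 R) (fun x y => @psD R x y 0) (@ps0 R 0)).
by apply: eq_bigr => l _; rewrite !mxE /c0 psM big_ord1.
Qed.

Lemma map_c01 (R : comNzRingType) :
  map_mx (@c0 R) (1%:M : 'M[pseries R]_3) = 1%:M.
Proof.
by apply/matrixP => i k; rewrite !mxE; case: (i == k).
Qed.

Definition o0 : 'I_3 := @Ordinal 3 0 isT.
Definition o1 : 'I_3 := @Ordinal 3 1 isT.
Definition o2 : 'I_3 := @Ordinal 3 2 isT.

Lemma sum3 (R : comNzRingType) (F : 'I_3 -> R) :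
  \sum_(k < 3) F k = F o0 + F o1 + F o2.
Proof.
rewrite !big_ord_recl big_ord0 addr0 addrA.
by congr (F _ + F _ + F _); apply: val_inj.
Qed.

Lemma ord3P (P : 'I_3 -> Prop) : P o0 -> P o1 -> P o2 -> forall i, P i.
Proof.
move=> h0 h1 h2 [] [ | [ | [ | i ] ] ] hi.
- by have -> : Ordinal hi = o0 by apply: val_inj.
- by have -> : Ordinal hi = o1 by apply: val_inj.
- by have -> : Ordinal hi = o2 by apply: val_inj.
- by [].
Qed.

Lemma tri_inv (R : comNzRingType) (U V : 'M[R]_3) :
  U *m V = 1%:M -> V *m U = 1%:M ->
  (forall i k : 'I_3, (k < i)%N -> U i k = 0) ->
  forall i k : 'I_3, (k < i)%N -> V i k = 0.
Proof.
move=> UV VU hU.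
have e1 i k : \sum_(l < 3) U i l * V l k = (i == k)%:R.
  by have := congr1 (fun M : 'M[R]_3 => M i k) UV; rewrite !mxE.
have e2 i k : \sum_(l < 3) V i l * U l k = (i == k)%:R.
  by have := congr1 (fun M : 'M[R]_3 => M i k) VU; rewrite !mxE.
have u10 := hU o1 o0 isT; have u20 := hU o2 o0 isT; have u21 := hU o2 o1 isT.
have := e1 o2 o2; rewrite sum3 u20 u21 !mul0r !add0r /= ?mulr1n ?mulr0n => E22.
have := e1 o2 o0; rewrite sum3 u20 u21 !mul0r !add0r /= ?mulr1n ?mulr0n => E20.
have := e1 o2 o1; rewrite sum3 u20 u21 !mul0r !add0r /= ?mulr1n ?mulr0n => E21.
have v20 : V o2 o0 = 0.
  by rewrite -(mul1r (V o2 o0)) -E22 mulrAC E20 mul0r.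
have v21 : V o2 o1 = 0.
  by rewrite -(mul1r (V o2 o1)) -E22 mulrAC E21 mul0r.
have := e2 o0 o0; rewrite sum3 u10 u20 !mulr0 !addr0 /= ?mulr1n ?mulr0n => F00.
have := e2 o1 o0; rewrite sum3 u10 u20 !mulr0 !addr0 /= ?mulr1n ?mulr0n => F10.
have v10 : V o1 o0 = 0.
  by rewrite -(mulr1 (V o1 o0)) -F00 mulrCA F10 mulr0.
move=> i k; elim/ord3P: i; elim/ord3P: k => //.
Qed.



Definition shiftmat (R : comNzRingType) (b : 'I_3 -> nat) (X : 'M[pseries R]_3)
  : 'M[pseries R]_3 :=
  \matrix_(i, k) (if (b k <= b i)%N then ps_v ^+ (b i - b k) * X i k
                  else rsh (b k - b i) (X i k)).
Arguments shiftmat {R}.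

Lemma key (R : comNzRingType) (b : 'I_3 -> nat) (X : 'M[pseries R]_3) :
  (forall i k : 'I_3, (b i < b k)%N -> forall n, (n < b k - b i)%N ->
     pscoef (X i k) n = 0) ->
  vdiag b *m X = shiftmat b X *m vdiag b.
Proof.
move=> H; apply/matrixP => i k; rewrite /vdiag mul_diag_mx mul_mx_diag !mxE.
case: leqP => h.
  by rewrite mulrAC -exprD subnK.
have -> : ps_v ^+ b k = ps_v ^+ (b k - b i) * ps_v ^+ b i :> pseries R.
  by rewrite -exprD subnK // ltnW.
rewrite [RHS]mulrC -mulrA mulrCA vX_rsh //.
exact: H.
Qed.

Lemma cancelD (R : comNzRingType) (b : 'I_3 -> nat) (A : 'M[pseries R]_3) :
  A *m vdiag b = vdiag b -> A = 1%:M.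
Proof.
move=> E; apply/matrixP => i k.
have := congr1 (fun M : 'M[pseries R]_3 => M i k) E.
rewrite /vdiag mul_mx_diag !mxE => E'.
apply: (@vX_cancel R (b k)); rewrite E'.
by case: eqP => [->|_]; rewrite ?mul1r ?mul0r.
Qed.



Theorem proposition2p16 (p f : nat) (a : 'I_3 -> 'I_f -> nat) (j : 'I_f)
    (s : 'S_3) (R : comNzRingType) (I : 'M[pseries R]_3) :
  prime p -> (3 < p)%N ->
  in_range p f a -> weakly_generic p f a ->
  (a (s (1%R : 'I_3)) (rev_ord j) < a (s (0%R : 'I_3)) (rev_ord j))%N ->
  (a (s (2%R : 'I_3)) (rev_ord j) < a (s (1%R : 'I_3)) (rev_ord j))%N ->
  in_Iwahori I ->
  forall phiI_inv : 'M[pseries R]_3,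
    map_mx (ps_phi p) I *m phiI_inv = 1%:M ->
    phiI_inv *m map_mx (ps_phi p) I = 1%:M ->
    exists M : 'M[pseries R]_3,
      in_D3 M /\
      vdiag (fun i => a (s i) (rev_ord j)) *m phiI_inv
        = M *m vdiag (fun i => a (s i) (rev_ord j)).
Proof.
move=> _ hp3 _ hgen h10 h21 [ [J [IJ JI] ] Itri] Pinv h1 h2.
have hp : (0 < p)%N by apply: leq_trans hp3.
set b := fun i => a (s i) (rev_ord j).
have e0 : o0 = 0%R by apply: val_inj.
have e1 : o1 = 1%R by apply: val_inj.
have e2 : o2 = 2%R by apply: val_inj.
have b10 : (b o1 < b o0)%N by rewrite /b e0 e1.
have b21 : (b o2 < b o1)%N by rewrite /b e1 e2.
have bdec : forall i k : 'I_3, (k < i)%N -> (b i < b k)%N.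
  move=> i k; elim/ord3P: i; elim/ord3P: k => //= _.
  exact: ltn_trans b21 b10.
have gapL : forall i k : 'I_3, (k < i)%N ->
    (3 <= b k - b i)%N /\ (b k - b i <= p - 4)%N.
  move=> i k hki.
  have hne : s i != s k.
    by rewrite (inj_eq perm_inj); apply/eqP => E; move: hki; rewrite E ltnn.
  have [g1 g2] := hgen (rev_ord j) (s i) (s k) hne.
  move: g1 g2; rewrite -/(b i) -/(b k) distnEr //.
  exact: ltnW (bdec _ _ hki).
have PJ : Pinv = map_mx (ps_phi p) J.
  rewrite -[Pinv]mulmx1 -(@map_phi1 R p hp) -IJ map_phiM //.
  by rewrite mulmxA h2 mul1mx.
have Jtri : forall i k : 'I_3, (k < i)%N -> pscoef (J i k) 0 = 0.
  move=> i k hki.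
  have := @tri_inv R (map_mx (@c0 R) I) (map_mx (@c0 R) J).
  rewrite -!map_c0M IJ JI map_c01 => /(_ erefl erefl).
  move=> /(_ _ _ _ hki); rewrite mxE; apply.
  by move=> i' k' h; rewrite mxE; apply: Itri.
have Plow : forall K : 'M[pseries R]_3,
    (forall i k : 'I_3, (k < i)%N -> pscoef (K i k) 0 = 0) ->
    forall i k : 'I_3, (k < i)%N -> forall n, (n < p)%N ->
      pscoef (map_mx (ps_phi p) K i k) n = 0.
  move=> K HK i k hki n hn; rewrite mxE phiE.
  case: ifP => // /dvdnP [q Eq].
  have hq : (q < 1)%N by rewrite -(ltn_pmul2r hp) mul1n -Eq.
  by move: hq; rewrite ltnS leqn0 => /eqP q0; rewrite Eq q0 div0n HK.
have hyp : forall K : 'M[pseries R]_3,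
    (forall i k : 'I_3, (k < i)%N -> pscoef (K i k) 0 = 0) ->
    forall i k : 'I_3, (b i < b k)%N -> forall n, (n < b k - b i)%N ->
     pscoef (map_mx (ps_phi p) K i k) n = 0.
  move=> K HK i k hbik n hn.
  have hki : (k < i)%N.
    case: (ltngtP k i) => // h.
      by move: (bdec _ _ h); rewrite ltnNge ltnW.
    by move: hbik; rewrite (_ : i = k) ?ltnn //; apply: val_inj.
  apply: Plow => //; have [_ g2] := gapL _ _ hki.
  apply: leq_trans hn _; apply: leq_trans g2 _; exact: leq_subr.
have keyP := @key R b _ (hyp _ Jtri); rewrite -PJ in keyP.
have keyI := @key R b _ (hyp _ Itri).
exists (shiftmat b Pinv); split => //.
split.
  exists (shiftmat b (map_mx (ps_phi p) I)); split.
    apply: (@cancelD R b).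
    by rewrite -mulmxA -keyI mulmxA -keyP -mulmxA h2 mulmx1.
  apply: (@cancelD R b).
  by rewrite -mulmxA -keyP mulmxA -keyI -mulmxA h1 mulmx1.
move=> i k hik n hn; rewrite mxE.
case: (ltngtP i k) => h.
- have [g1 _] := gapL _ _ h.
  rewrite ifT; last exact: ltnW (bdec _ _ h).
  rewrite coef_vX ifN //.
  by rewrite -ltnNge; apply: leq_trans hn g1.
- have [g1 g2] := gapL _ _ h.
  rewrite ifN; last by rewrite -ltnNge bdec.
  rewrite /= PJ; apply: Plow => //.
  lia.
- by case/eqP: hik; apply: val_inj.
Qed.
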